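(* Let $G$ be a finite connected graph with a fixed normal orientation $\varepsilon$ and a fixed total order on $E(G)$, and let $e=uv$ be the largest edge of $G$, assumed not to be a loop. Let $\varepsilon_1\neq\varepsilon_2$ be two reduced totally cyclic orientations of $G$ such that $e$ is cycle flippable neither with respect to $\varepsilon_1$ nor with respect to $\varepsilon_2$. Let $\varepsilon_1',\varepsilon_2'$ be the orientations of the contracted graph $G/e$ induced by $\varepsilon_1,\varepsilon_2$. Then $\varepsilon_1'$ and $\varepsilon_2'$ are not Eulerian equivalent.
   Context: An orientation assigns a direction to each edge; it is totally cyclic if every edge lies on a directed cycle. Two orientations $\varepsilon_1,\varepsilon_2$ of a graph are Eulerian equivalent if the spanning subgraph formed by the edges on which they differ, oriented by $\varepsilon_1$, has in-degree equal to out-degree at every vertex. Given the normal orientation $\varepsilon$ and the total order, an orientation $\varepsilon'$ is reduced if for every edge $f$, either $\varepsilon'(f)=\varepsilon(f)$, or there is no cycle that is directed with respect to $\varepsilon'$, contains $f$, and has all its other edges smaller than $f$. An edge $e$ with endpoints $u,v$ is cycle flippable with respect to an orientation if in $G-e$ (with the induced orientation) there are directed paths both from $u$ to $v$ and from $v$ to $u$. *)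

(* Defs.v *)
(* Finite multigraphs (loops and parallel edges allowed):
   vertices V : finType, edges 'I_m (the total order on edges is the natural
   order of ordinals), and ends f = (x, y) the two endpoints of edge f.
   An orientation o : E -> bool orients f from (ends f).1 to (ends f).2 when
   o f = true and the other way when o f = false. *)
From mathcomp Require Import all_boot.
Set Implicit Arguments. Unset Strict Implicit. Unset Printing Implicit Defensive.

Section Graphs.
Variables (V E : finType) (ends : E -> V * V).

Definition tl (o : E -> bool) (f : E) : V := if o f then (ends f).1 else (ends f).2.
Definition hd (o : E -> bool) (f : E) : V := if o f then (ends f).2 else (ends f).1.

Definition dcycle (o : E -> bool) (c : seq E) : bool :=
  [&& c != [::], cycle (fun f g => hd o f == tl o g) c & uniq (map (tl o) c)].

Definition totally_cyclic (o : E -> bool) : Prop :=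
  forall f : E, exists c, dcycle o c /\ f \in c.

Definition eulerian_equiv (o1 o2 : E -> bool) : Prop :=
  forall x : V, #|[set f | (o1 f != o2 f) && (hd o1 f == x)]|
              = #|[set f | (o1 f != o2 f) && (tl o1 f == x)]|.

Definition dstep (o : E -> bool) (e : E) : rel V :=
  fun x y => [exists f, [&& f != e, tl o f == x & hd o f == y]].

Definition cycle_flippable (o : E -> bool) (e : E) : bool :=
  connect (dstep o e) (ends e).1 (ends e).2 && connect (dstep o e) (ends e).2 (ends e).1.

Definition uadj : rel V :=
  fun x y => [exists f, (ends f == (x, y)) || (ends f == (y, x))].

Definition connected : Prop := forall x y : V, connect uadj x y.

(* Contraction G/e (e not a loop): the endpoint (ends e).2 is merged into (ends e).1 *)
Variable e : E.
Hypothesis he : (ends e).1 != (ends e).2.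

Lemma contr_ok (x : V) : (if x == (ends e).2 then (ends e).1 else x) != (ends e).2.
Proof. by case: (x =P (ends e).2) => // /eqP. Qed.

Definition cV := {x : V | x != (ends e).2}.
Definition cE := {f : E | f != e}.

Definition contr_v (x : V) : cV := exist (fun y => y != (ends e).2) _ (contr_ok x).

Definition c_ends (f : cE) : cV * cV :=
  (contr_v (ends (val f)).1, contr_v (ends (val f)).2).

Definition c_or (o : E -> bool) (f : cE) : bool := o (val f).

End Graphs.

Definition reduced (V : finType) (m : nat) (ends : 'I_m -> V * V)
  (eps o : 'I_m -> bool) : Prop :=
  forall f : 'I_m, o f = eps f \/
    ~ (exists c, [/\ dcycle ends o c, f \in c &
                    forall g, g \in c -> g != f -> (g < f)%N]).

(* Main.v *)
Require Import Defs.
From mathcomp Require Import all_boot.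
Set Implicit Arguments. Unset Strict Implicit. Unset Printing Implicit Defensive.
From Stdlib Require Import FunctionalExtensionality.

Section Gen.
Variables (V E : finType) (ends : E -> V * V).

Definition srel (o : E -> bool) (S : pred E) : rel V :=
  fun x y => [exists f, [&& S f, tl ends o f == x & hd ends o f == y]].

Definition stepr (o : E -> bool) : rel E := fun f g => hd ends o f == tl ends o g.

Lemma hd_tl_path o x p y : path (stepr o) x (rcons p y) ->
  map (hd ends o) (x :: p) = map (tl ends o) (rcons p y).
Proof.
elim: p x => [|z p IH] x /=; first by rewrite andbT => /eqP ->.
by case/andP => /eqP -> /IH /= ->.
Qed.

Lemma hd_rot o c : cycle (stepr o) c -> map (hd ends o) c = rot 1 (map (tl ends o) c).
Proof.
case: c => [|x p] // H; rewrite (hd_tl_path H) map_rcons /= rot1_cons //.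
Qed.

Lemma dcycle_rev (o o' : E -> bool) c :
  (forall f, f \in c -> o' f = ~~ o f) -> dcycle ends o c -> dcycle ends o' (rev c).
Proof.
move=> Ho /and3P [c0 cyc un]; apply/and3P; split.
- by rewrite -size_eq0 size_rev size_eq0.
- rewrite rev_cycle.
  have Hc : all (mem c) c by apply/allP.
  rewrite -(eq_in_cycle (e := stepr o) _ Hc) //.
  move=> f g fc gc /=; rewrite /stepr /hd /tl !Ho //.
  by case: (o f); case: (o g); rewrite /= eq_sym.
- rewrite map_rev rev_uniq.
  have -> : map (tl ends o') c = map (hd ends o) c.
    by apply/eq_in_map => f fc; rewrite /tl /hd Ho //; case: (o f).
  by rewrite hd_rot // rot_uniq.
Qed.

Lemma walk_edges o (S : pred E) x p : path (srel o S) x p ->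
  exists q, [/\ all S q, map (tl ends o) q = belast x p & map (hd ends o) q = p].
Proof.
elim: p x => [|a p IH] x /=; first by exists [::].
case/andP => /existsP [g /and3P [Sg /eqP tg /eqP hg]] /IH [q [Sq tq hq]].
by exists (g :: q); rewrite /= Sg Sq tq hq tg hg.
Qed.

Lemma path_of_maps o q x p g g' : map (tl ends o) q = belast x p ->
  map (hd ends o) q = p -> hd ends o g = x -> tl ends o g' = last x p ->
  path (stepr o) g (rcons q g').
Proof.
elim: q x p g => [|z q IH] x p g /=.
  by case: p => // _ _ hg tg /=; rewrite /stepr hg tg eqxx.
case: p => // a p /= [tz tq] [hz hq] hg tg'.
rewrite /stepr hg tz eqxx /=.
exact: (IH a p z tq hq hz tg').
Qed.

Lemma extract_cycle o (S : pred E) f : S f -> connect (srel o S) (hd ends o f) (tl ends o f) ->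
  exists c, dcycle ends o c /\ all S c.
Proof.
move=> Sf /connectP [p0 pth0 lst].
case: (shortenP pth0) lst => p pth un _ lst.
have [q [Sq tq hq]] := walk_edges pth.
exists (f :: q); split; last by rewrite /= Sf.
apply/and3P; split => //.
- exact: (path_of_maps tq hq (erefl _) lst).
- by rewrite /= tq lst; move: un; rewrite lastI rcons_uniq.
Qed.

Lemma path_conn o e x p y : path (stepr o) x (rcons p y) ->
  (forall z, z \in p -> z != e) ->
  connect (dstep ends o e) (hd ends o x) (tl ends o y).
Proof.
elim: p x => [|z p IH] x /=.
  by rewrite andbT => /eqP -> _; apply: connect0.
case/andP => /eqP hx pth Hp; rewrite hx.
apply: connect_trans (IH _ pth _); last by move=> w wp; apply: Hp; rewrite inE wp orbT.
apply: connect1; apply/existsP; exists z; rewrite !eqxx !andbT.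
by apply: Hp; rewrite inE eqxx.
Qed.

Lemma cyc_conn o e c : dcycle ends o c -> e \in c ->
  connect (dstep ends o e) (hd ends o e) (tl ends o e).
Proof.
case/and3P => _ cyc un ec.
have uc : uniq c := map_uniq un.
case: (rot_to ec) => i p Hr.
have cy : cycle (stepr o) (e :: p) by rewrite -Hr rot_cycle.
have : uniq (e :: p) by rewrite -Hr rot_uniq.
move=> /= /andP [ep _].
apply: (path_conn cy) => z zp; apply/eqP => ze; by rewrite -ze zp in ep.
Qed.

Definition cin o (S : pred E) x := #|[set f | S f && (hd ends o f == x)]|.
Definition cout o (S : pred E) x := #|[set f | S f && (tl ends o f == x)]|.

Lemma sum_cnt (h : E -> V) (A : pred E) (R : pred V) :
  \sum_(x | R x) #|[set f | A f && (h f == x)]| = #|[set f | A f && R (h f)]|.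
Proof.
rewrite -sum1dep_card (partition_big h R) /=; last by move=> f /andP [].
apply: eq_bigr => x Rx; rewrite -sum1dep_card; apply: eq_bigl => f.
case: eqP => [hx|_]; last by rewrite !andbF.
by rewrite !andbT hx Rx andbT.
Qed.

Lemma sub_out_in o (S : pred E) a :
  [set f | S f && connect (srel o S) a (tl ends o f)] \subset
  [set f | S f && connect (srel o S) a (hd ends o f)].
Proof.
apply/subsetP => f; rewrite !inE => /andP [Sf Rt]; rewrite Sf /=.
apply: connect_trans Rt (connect1 _); apply/existsP; exists f.
by rewrite Sf !eqxx.
Qed.

Lemma path_exists o (S : pred E) a b : cin o S a < cout o S a ->
  (forall x, x != a -> x != b -> cin o S x = cout o S x) ->
  connect (srel o S) a b.
Proof.
move=> lt bal; apply/negPn/negP => nab.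
have := subset_leq_card (sub_out_in o S a).
rewrite -!(sum_cnt _ _ (connect (srel o S) a)) -/(cin o S) -/(cout o S).
rewrite (bigD1 a) ?connect0 //= [X in _ <= X](bigD1 a) ?connect0 //=.
rewrite (eq_bigr (fun x => cin o S x)); last first.
  move=> x /andP [Rx xa]; rewrite bal //; apply/eqP => xb; rewrite xb in Rx.
  by rewrite Rx in nab.
by rewrite leq_add2r leqNgt lt.
Qed.

Lemma cyc_exists o (S : pred E) g : (forall x, cin o S x = cout o S x) -> S g ->
  connect (srel o S) (hd ends o g) (tl ends o g).
Proof.
move=> bal Sg; apply/negPn/negP => nc.
set R := connect (srel o S) (hd ends o g).
have eqs : \sum_(x | R x) cout o S x = \sum_(x | R x) cin o S x.
  by apply: eq_bigr => x _; rewrite bal.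
rewrite /cout /cin !sum_cnt in eqs.
have : [set f | S f && R (tl ends o f)] \proper [set f | S f && R (hd ends o f)].
  apply/properP; split; first exact: sub_out_in.
  exists g; rewrite !inE Sg /= /R ?connect0 //.
by move/proper_card; rewrite eqs ltnn.
Qed.


End Gen.

Section Contr.
Variables (V E : finType) (ends : E -> V * V) (e : E).
Hypothesis he : (ends e).1 != (ends e).2.

Lemma card_sub_val (P : pred E) :
  #|[set f : cE e | P (val f)]| = #|[set f | (f != e) && P f]|.
Proof.
rewrite -(card_imset _ val_inj); apply: eq_card => f; rewrite !inE.
apply/imsetP/andP => [[g gin ->]|[fe Pf]].
  by rewrite inE in gin; split => //; apply: (valP g).
by exists (exist (fun g => g != e) f fe); rewrite ?inE.
Qed.

Definition Rp (y0 x : V) := (if x == (ends e).2 then (ends e).1 else x) == y0.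

Lemma cnt_c (o1 o2 : E -> bool) y0 (hy0 : y0 != (ends e).2)
  (hc : (cE e -> bool) -> cE e -> cV ends e) (h : (E -> bool) -> E -> V)
  (hch : forall f, hc (c_or o1) f = contr_v he (h o1 (val f))) :
  #|[set f : cE e | (c_or o1 f != c_or o2 f) &&
      (hc (c_or o1) f == exist (fun y => y != (ends e).2) y0 hy0)]| =
  #|[set f | ((f != e) && (o1 f != o2 f)) && Rp y0 (h o1 f)]|.
Proof.
have -> : [set f : cE e | (c_or o1 f != c_or o2 f) &&
      (hc (c_or o1) f == exist (fun y => y != (ends e).2) y0 hy0)] =
   [set f : cE e | (fun g => (o1 g != o2 g) && Rp y0 (h o1 g)) (val f)].
  by apply/setP => f; rewrite !inE hch /contr_v -val_eqE.
by rewrite (card_sub_val (fun g => (o1 g != o2 g) && Rp y0 (h o1 g))); apply: eq_card => f; rewrite !inE andbA.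
Qed.

Lemma hd_c o (f : cE e) : hd (c_ends he) (c_or o) f = contr_v he (hd ends o (val f)).
Proof. by rewrite /hd /c_ends /c_or; case: (o (val f)). Qed.

Lemma tl_c o (f : cE e) : tl (c_ends he) (c_or o) f = contr_v he (tl ends o (val f)).
Proof. by rewrite /tl /c_ends /c_or; case: (o (val f)). Qed.

Lemma sum_R1 y0 (F : V -> nat) : y0 != (ends e).1 -> y0 != (ends e).2 ->
  \sum_(x | Rp y0 x) F x = F y0.
Proof.
move=> h1 h2; apply: big_pred1 => x; rewrite /Rp /=.
case: (x =P (ends e).2) => [->|//]; by rewrite eq_sym (negbTE h1) eq_sym (negbTE h2).
Qed.

Lemma sum_R2 (F : V -> nat) :
  \sum_(x | Rp (ends e).1 x) F x = F (ends e).1 + F (ends e).2.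
Proof.
rewrite (bigD1 (ends e).1) /=; last by rewrite /Rp eq_sym (negbTE he).
congr (_ + _); apply: big_pred1 => x; rewrite /Rp /=.
case: (x =P (ends e).2) => [->|_]; first by rewrite eqxx eq_sym he.
by rewrite andbN.
Qed.

Lemma euler_bal o1 o2 (H : eulerian_equiv (c_ends he) (c_or o1) (c_or o2)) y0 :
  y0 != (ends e).2 ->
  \sum_(x | Rp y0 x) cin ends o1 [pred f | (f != e) && (o1 f != o2 f)] x =
  \sum_(x | Rp y0 x) cout ends o1 [pred f | (f != e) && (o1 f != o2 f)] x.
Proof.
move=> hy0; have := H (exist _ y0 hy0).
rewrite (cnt_c o2 hy0 (hd_c o1)) (cnt_c o2 hy0 (tl_c o1)).
by rewrite /cin /cout !sum_cnt.
Qed.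

End Contr.


Lemma max_seq n (c : seq 'I_n) : c != [::] ->
  exists2 g, g \in c & forall h, h \in c -> (h <= g)%N.
Proof.
elim: c => // x p IH _.
case: p IH => [|y p] IH.
  by exists x; [rewrite inE | move=> h; rewrite inE => /eqP ->].
have [g gp gmax] := IH isT.
case: (leqP x g) => xg.
  exists g; first by rewrite inE gp orbT.
  by move=> h; rewrite inE => /orP [/eqP ->|/gmax].
exists x; first by rewrite inE eqxx.
move=> h; rewrite inE => /orP [/eqP -> //|/gmax hg].
exact: leq_trans hg (ltnW xg).
Qed.

Lemma nocyc (V : finType) (m : nat) (ends : 'I_m.+1 -> V * V) (eps o1 o2 : 'I_m.+1 -> bool) c :
  reduced ends eps o1 -> reduced ends eps o2 ->
  dcycle ends o1 c -> all [pred f | o1 f != o2 f] c -> False.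
Proof.
move=> R1 R2 dc Sc.
have c0 : c != [::] by case/and3P: dc.
have [g gc gmax] := max_seq c0.
have lt : forall h, h \in c -> h != g -> (h < g)%N.
  by move=> h hc hg; rewrite ltn_neqAle gmax // andbT val_eqE.
have Hc : forall f, f \in c -> o2 f = ~~ o1 f.
  move=> f fc; have := allP Sc f fc; rewrite /=.
  by case: (o1 f); case: (o2 f).
have e1 : o1 g = eps g.
  case: (R1 g) => // nope; exfalso; apply: nope; exists c; split => //.
have e2 : o2 g = eps g.
  case: (R2 g) => // nope; exfalso; apply: nope; exists (rev c); split.
  - exact: dcycle_rev Hc dc.
  - by rewrite mem_rev.
  - by move=> h; rewrite mem_rev; apply: lt.
have := allP Sc g gc; by rewrite /= e1 e2 eqxx.
Qed.

Theorem lemma4 (V : finType) (m : nat) (ends : 'I_m.+1 -> V * V)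
  (eps o1 o2 : 'I_m.+1 -> bool)
  (he : (ends ord_max).1 != (ends ord_max).2) :
  connected ends ->
  o1 <> o2 ->
  totally_cyclic ends o1 -> totally_cyclic ends o2 ->
  reduced ends eps o1 -> reduced ends eps o2 ->
  ~~ cycle_flippable ends o1 ord_max -> ~~ cycle_flippable ends o2 ord_max ->
  ~ eulerian_equiv (c_ends he) (c_or o1) (c_or o2).
Proof.
move=> _ ne TC1 TC2 R1 R2 NF1 NF2 H.
set S := [pred f | o1 f != o2 f].
set T := [pred f | (f != ord_max) && (o1 f != o2 f)].
have NOC : forall c, dcycle ends o1 c -> all S c -> False.
  by move=> c; apply: nocyc R1 R2.
have C1 : connect (dstep ends o1 ord_max) (hd ends o1 ord_max) (tl ends o1 ord_max).
  by have [c [dc ec]] := TC1 ord_max; apply: cyc_conn dc ec.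
have C2 : connect (dstep ends o2 ord_max) (hd ends o2 ord_max) (tl ends o2 ord_max).
  by have [c [dc ec]] := TC2 ord_max; apply: cyc_conn dc ec.
have TS : forall x y, connect (srel ends o1 T) x y -> connect (srel ends o1 S) x y.
  move=> x y; apply: connect_sub => a b /existsP [f /and3P [Tf h1 h2]].
  apply: connect1; apply/existsP; exists f; rewrite h1 h2 andbT /=.
  by move: Tf => /= /andP [_ ->].
have cycS : o1 ord_max != o2 ord_max -> connect (srel ends o1 T) (hd ends o1 ord_max) (tl ends o1 ord_max) -> False.
  move=> Se /TS; move: (@extract_cycle _ _ ends o1 S ord_max Se) => X /X [c [dc Sc]].
  exact: NOC dc Sc.
have P1 : forall x y, connect (srel ends o1 T) x y -> connect (dstep ends o1 ord_max) x y.
  move=> x y; apply: connect_sub => a b /existsP [f /and3P [Tf h1 h2]].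
  apply: connect1; apply/existsP; exists f; rewrite h1 h2 andbT.
  by move: Tf => /= /andP [-> _].
have P2 : forall x y, connect (srel ends o1 T) x y -> connect (dstep ends o2 ord_max) y x.
  move=> x y hxy.
  have : connect [rel a b | srel ends o1 T b a] y x by rewrite connect_rev.
  apply: connect_sub => a b /existsP [f /and3P [Tf h1 h2]].
  move: Tf => /= /andP [fe d].
  apply: connect1; apply/existsP; exists f; rewrite fe /=.
  move: d h1 h2; rewrite /tl /hd.
  by case: (o1 f); case: (o2 f) => //= _ /eqP -> /eqP ->; rewrite !eqxx.
have KEY : forall a b, ((a == (ends ord_max).1) && (b == (ends ord_max).2)) ||
    ((a == (ends ord_max).2) && (b == (ends ord_max).1)) ->
    connect (srel ends o1 T) a b -> False.
{ move=> a b hab cab.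
  have Q1 := P1 _ _ cab; have Q2 := P2 _ _ cab.
  move: NF1 NF2 C1 C2 cycS; rewrite /cycle_flippable /hd /tl.
  case/orP: hab => /andP [/eqP ha /eqP hb]; rewrite ha hb in Q1 Q2 cab *.
  all: case: (o1 ord_max); case: (o2 ord_max) => /=.
  all: move=> N1 N2 c1 c2 cs.
  all: first [ by move: N1; rewrite ?c1 ?Q1 | by move: N2; rewrite ?c2 ?Q2 | exact: cs isT cab ]. }
set inn := cin ends o1 T; set out := cout ends o1 T.
have bal : forall x, x != (ends ord_max).1 -> x != (ends ord_max).2 -> inn x = out x.
  by move=> x xu xv; have := euler_bal H xv; rewrite !sum_R1.
have buv : inn (ends ord_max).1 + inn (ends ord_max).2 = out (ends ord_max).1 + out (ends ord_max).2.
  by have := euler_bal H he; rewrite !(sum_R2 he).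
case: (ltngtP (inn (ends ord_max).1) (out (ends ord_max).1)) => [lt|gt|eq].
- apply: (KEY (ends ord_max).1 (ends ord_max).2); first by rewrite !eqxx.
  by apply: path_exists lt _ => x xu xv; apply: bal.
- have lt2 : inn (ends ord_max).2 < out (ends ord_max).2.
    rewrite ltnNge; apply/negP => le.
    by have := leq_add gt le; rewrite buv addSn ltnn.
  apply: (KEY (ends ord_max).2 (ends ord_max).1); first by rewrite !eqxx orbT.
  by apply: path_exists lt2 _ => x xv xu; apply: bal.
- have eqv : inn (ends ord_max).2 = out (ends ord_max).2.
    by move: buv; rewrite eq => /addnI.
  have ball : forall x, inn x = out x.
    move=> x; case: (x =P (ends ord_max).1) => [->//|/eqP xu].
    case: (x =P (ends ord_max).2) => [->//|/eqP xv]; exact: bal.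
  case: (pickP T) => [g Tg|T0].
  + have Sg : S g by move: Tg => /= /andP [].
    have := cyc_exists ball Tg; move/TS.
    move: (@extract_cycle _ _ ends o1 S g Sg) => X /X [c [dc Sc]].
    exact: NOC dc Sc.
  + have [f0 f0d] : exists f, o1 f != o2 f.
      case: (pickP S) => [f Sf|S0]; first by exists f.
      exfalso; apply: ne; apply: functional_extensionality => f.
      by move: (S0 f) => /= /negbFE /eqP.
    have f0e : f0 = ord_max.
      by move: (T0 f0) => /=; rewrite f0d andbT => /negbFE /eqP.
    rewrite f0e in f0d.
    have agree : forall f, f != ord_max -> o1 f = o2 f.
      by move=> f fe; move: (T0 f) => /=; rewrite fe /= => /negbFE /eqP.
    have DS : dstep ends o2 ord_max =2 dstep ends o1 ord_max.
      move=> x y; apply/existsP/existsP => [][f /and3P [fe h1 h2]]; exists f;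
        move: h1 h2; rewrite /tl /hd (agree f fe) => h1 h2; by rewrite fe h1 h2.
    rewrite (eq_connect DS) in C2.
    move: NF1 C1 C2 f0d; rewrite /cycle_flippable /hd /tl.
    case: (o1 ord_max); case: (o2 ord_max) => //= N c1 c2 _.
    all: by move: N; rewrite c1 c2.
Qed.
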